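(* Let $G$ be a quiver with $n \geq 1$ vertices, let $\lambda_1 \leq \lambda_2 \leq \cdots \leq \lambda_n$ be the eigenvalues of its Kirchhoff matrix $K$ (listed with multiplicity), and let $d_1 \leq d_2 \leq \cdots \leq d_n$ be its vertex degrees in increasing order, with the convention $d_0 = 0$. Then $\lambda_k \leq d_k + d_{k-1}$ for all $1 \leq k \leq n$.
   Context: A quiver $G=(V,E)$ consists of a finite vertex set $V=\{1,\dots,n\}$ and a finite list (multiset) $E$ of pairs $(v,w)\in V\times V$; repeated edges (multiple connections) and self-loops $(v,v)$ are allowed, and orientation of edges is irrelevant. The adjacency matrix $A$ is the symmetric $n\times n$ matrix with zero diagonal whose entry $A_{ij}$ ($i\neq j$) is the number of entries of $E$ equal to $(i,j)$ or $(j,i)$. The degree $d(i)$ of vertex $i$ is the number of entries $(v,w)$ of $E$ (counted with multiplicity) with $v=i$ or $w=i$; in particular a loop at $i$ contributes $1$ to $d(i)$. $B$ is the diagonal matrix of degrees, and the Kirchhoff matrix is $K=B-A$ (a real symmetric matrix). *)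

(* Defs.v *)
From HB Require Import structures.
From mathcomp Require Import all_boot all_order all_algebra.
From mathcomp Require Import reals.
Set Implicit Arguments. Unset Strict Implicit. Unset Printing Implicit Defensive.
Import Order.TTheory GRing.Theory Num.Theory.
Local Open Scope ring_scope.

(* A quiver on vertex set 'I_n is given by a list (multiset) of edges;
   orientation is irrelevant. *)
Definition quiver (n : nat) := seq ('I_n * 'I_n).

Definition adjacency {n : nat} (E : quiver n) (i j : 'I_n) : nat :=
  if i == j then 0%N
  else count (fun e : 'I_n * 'I_n => (e == (i, j)) || (e == (j, i))) E.

(* degree: number of edges (with multiplicity) having i as an endpoint;
   a loop at i contributes 1. *)
Definition degree {n : nat} (E : quiver n) (i : 'I_n) : nat :=
  count (fun e : 'I_n * 'I_n => (e.1 == i) || (e.2 == i)) E.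

Definition kirchhoff (R : realType) {n : nat} (E : quiver n) : 'M[R]_n :=
  \matrix_(i, j) ((i == j)%:R * (degree E i)%:R - (adjacency E i j)%:R).

(* Degrees in increasing order (0-indexed list d_1, ..., d_n). *)
Definition sorted_degrees {n : nat} (E : quiver n) : seq nat :=
  sort leq [seq degree E i | i <- enum 'I_n].

(* Main.v *)
Require Import Defs.
From HB Require Import structures.
From mathcomp Require Import all_boot all_order all_algebra.
From mathcomp Require Import reals.
From mathcomp Require Import complex spectral sesquilinear.
From mathcomp Require Import ring lra zify.
Import Order.TTheory GRing.Theory Num.Theory.

Lemma count_le_nth (s : seq nat) j : sorted leq s -> (j < size s)%N ->
  (j.+1 <= count (fun x => x <= (nth 0 s j)) s)%N.
Proof.
move=> ss js; set P := (fun x => x <= (nth 0 s j)).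
rewrite -(cat_take_drop j.+1 s) count_cat.
have -> : count P (take j.+1 s) = j.+1.
  have sz : size (take j.+1 s) = j.+1 by rewrite size_takel.
  rewrite -{2}sz; apply/eqP; rewrite -all_count; apply/(all_nthP 0) => i.
  rewrite sz => hi; rewrite nth_take // /P.
  apply: (sorted_leq_nth leq_trans leqnn) => //; rewrite inE; lia.
exact: leq_addr.
Qed.

Lemma choose_S n (E : quiver n) k : (k < n)%N ->
  let s := sorted_degrees E in
  let M := ((nth 0 s k) + (if k is k'.+1 then (nth 0 s k') else 0))%N in
  exists S : {set 'I_n}, [/\ (k < #|S|)%N,
    (forall v, v \in S -> degree E v <= M)%N &
    (forall u v, u \in S -> v \in S -> u != v -> degree E u + degree E v <= M)%N].
Proof.
move=> kn s M.
set t := (if k is k'.+1 then (nth 0 s k') else 0).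
have ss : sorted leq s by apply: sort_sorted; exact: leq_total.
have sz : size s = n by rewrite size_sort size_map size_enum_ord.
have pe : perm_eq s [seq degree E i | i <- enum 'I_n] by rewrite perm_sort.
have ts : t <= (nth 0 s k).
  rewrite /t; case: k kn {M t} => // k' kn.
  apply: (sorted_leq_nth leq_trans leqnn) => //; rewrite inE; lia.
have ct : k <= count (fun x => x <= t) s.
  rewrite /t; case: (k) kn => // k' kn'; apply: count_le_nth => //; rewrite sz; lia.
have [w _ hw] : exists2 w, w \in enum 'I_n & (nth 0 s k) = degree E w.
  apply/mapP; rewrite -(perm_mem pe); by apply: mem_nth; rewrite sz.
pose A := [set v | degree E v <= t].
have cardA : #|A| = count (fun x => x <= t) s.
  rewrite (permP pe) count_map enumT cardE /enum_mem size_filter.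
  by apply: eq_count => v; rewrite /= inE.
exists (w |: A); split.
- rewrite cardsU1 cardA.
  case: (boolP (w \in A)) => wA /=.
    have : (nth 0 s k) <= t by move: wA; rewrite inE hw.
    move=> skt; rewrite add0n; apply: (leq_trans (@count_le_nth _ k ss _)); first by rewrite sz.
    by apply: sub_count => x /= /leq_trans; apply.
  by rewrite add1n ltnS.
- move=> v; rewrite !inE => /orP[/eqP ->|]; rewrite /M -/t; lia.
- move=> u v; rewrite !inE /M -/t => /orP[/eqP ->|hu] /orP[/eqP ->|hv] //; try lia.
  by rewrite eqxx.
Qed.

Local Open Scope ring_scope.

Ltac kill := repeat match goal with
 | H : is_true (?x != ?x) |- _ => by rewrite eqxx in H
 | H : is_true (?x != ?y) |- context[?x == ?y] => rewrite (negbTE H)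
 | H : is_true (?x != ?y) |- context[?y == ?x] => rewrite (eq_sym y x) (negbTE H)
 | |- context[?x == ?x] => rewrite eqxx
 end.

Lemma key_ineq (R : realFieldType) (p q M x y : R) :
  0 < p -> 0 < q -> p + q <= M -> (x - y) ^+ 2 <= M * x ^+ 2 / p + M * y ^+ 2 / q.
Proof.
move=> p0 q0 pqM.
set s := x / p; set t := y / q.
have hx : x = s * p by rewrite /s divfK // gt_eqF.
have hy : y = t * q by rewrite /t divfK // gt_eqF.
have -> : M * x ^+ 2 / p = M * s ^+ 2 * p by rewrite hx; field; rewrite gt_eqF.
have -> : M * y ^+ 2 / q = M * t ^+ 2 * q by rewrite hy; field; rewrite gt_eqF.
rewrite hx hy.
have h1 : 0 <= s ^+ 2 * p + t ^+ 2 * q by apply: addr_ge0; apply: mulr_ge0; rewrite ?sqr_ge0 ?ltW.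
have h2 : (p + q) * (s ^+ 2 * p + t ^+ 2 * q) <= M * (s ^+ 2 * p + t ^+ 2 * q) by apply: ler_wpM2r.
have h3 : 0 <= p * q * (s + t) ^+ 2 by apply: mulr_ge0; rewrite ?sqr_ge0 // mulr_ge0 // ltW.
nra.
Qed.

Section Graph.
Variable R : realType.
Variable n : nat.
Implicit Types (E : quiver n) (a : 'I_n -> R).

Lemma count_natr (T : Type) (p : pred T) (s : seq T) :
  (count p s)%:R = \sum_(x <- s) (p x)%:R :> R.
Proof.
elim: s => [|x s IH]; first by rewrite big_nil.
by rewrite big_cons /= natrD IH.
Qed.

Definition ke (e : 'I_n * 'I_n) (i j : 'I_n) : R :=
  (i == j)%:R * ((e.1 == i) || (e.2 == i))%:R
  - ((i != j) && ((e == (i, j)) || (e == (j, i))))%:R.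

Lemma kir_sum E i j : kirchhoff R E i j = \sum_(e <- E) ke e i j.
Proof.
rewrite mxE /degree /adjacency /ke sumrB -mulr_sumr -!count_natr.
by case: (i =P j) => [->|/eqP nij] /=; rewrite ?eqxx ?(negbTE nij) //= count_pred0 ?mul0r.
Qed.

Lemma sum_delta (F : 'I_n -> R) x : \sum_j (j == x)%:R * F j = F x.
Proof.
rewrite (bigD1 x) //= eqxx mul1r big1 ?addr0 // => j /negbTE ->; by rewrite mul0r.
Qed.

Definition term (e : 'I_n * 'I_n) a : R :=
  if e.1 == e.2 then a e.1 ^+ 2 else (a e.1 - a e.2) ^+ 2.

Lemma ke_quad e a :
  \sum_i \sum_j a i * ke e i j * a j = term e a.
Proof.
case: e => u v; rewrite /term /ke /=.
have inner : forall i, \sum_j a i * ((i == j)%:R * ((u == i) || (v == i))%:R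
      - ((i != j) && (((u, v) == (i, j)) || ((u, v) == (j, i))))%:R) * a j
   = ((u == i) || (v == i))%:R * a i ^+ 2
     - (u != v)%:R * ((u == i)%:R * a i * a v + (v == i)%:R * a i * a u).
  move=> i.
  transitivity (\sum_j ((j == i)%:R * (((u == i) || (v == i))%:R * a i ^+ 2)
     - (u != v)%:R * ((j == v)%:R * ((u == i)%:R * a i * a v)
                    + (j == u)%:R * ((v == i)%:R * a i * a u)))).
    apply: eq_bigr => j _.
    rewrite !xpair_eqE.
    case: (j =P i) => [?|/eqP nji]; case: (j =P v) => [?|/eqP njv];
    case: (j =P u) => [?|/eqP nju]; case: (u =P i) => [?|/eqP nui];
    case: (v =P i) => [?|/eqP nvi]; case: (u =P v) => [?|/eqP nuv]; subst;
    kill; simpl; kill; ring.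
  by rewrite sumrB sum_delta -mulr_sumr big_split /= !sum_delta.
rewrite (eq_bigr _ (fun i _ => inner i)) sumrB -mulr_sumr big_split /=.
have sd' : forall (F : 'I_n -> R) x, \sum_j (x == j)%:R * F j = F x.
  by move=> F x; rewrite -[RHS](sum_delta F x); apply: eq_bigr => j _; rewrite eq_sym.
under [X in _ - _ * (X + _)]eq_bigr do rewrite -!mulrA.
under [X in _ - _ * (_ + X)]eq_bigr do rewrite -!mulrA.
rewrite !(sd' (fun i => a i * _)).
case: (u =P v) => [<-|/eqP nuv]; rewrite ?eqxx /=.
  by under eq_bigr do rewrite orbb; rewrite (sd' (fun i => a i ^+ 2)); ring.
have -> : \sum_i ((u == i) || (v == i))%:R * a i ^+ 2 =
          \sum_i ((u == i)%:R * a i ^+ 2 + (v == i)%:R * a i ^+ 2).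
  apply: eq_bigr => i _; case: (u =P i) => [<-|_]; rewrite ?(negbTE nuv) ?eqxx /=.
    by rewrite (eq_sym v) (negbTE nuv) mul0r addr0.
  by rewrite mul0r add0r.
rewrite big_split /= !(sd' (fun i => a i ^+ 2)) mul1r; ring.
Qed.

Lemma quad_edges E a :
  \sum_i \sum_j a i * kirchhoff R E i j * a j = \sum_(e <- E) term e a.
Proof.
transitivity (\sum_i \sum_j \sum_(e <- E) a i * ke e i j * a j).
  apply: eq_bigr => i _; apply: eq_bigr => j _.
  by rewrite kir_sum mulr_sumr mulr_suml.
under eq_bigr do rewrite exchange_big /=.
by rewrite exchange_big /=; apply: eq_bigr => e _; rewrite ke_quad.
Qed.

Lemma sum_end (F : 'I_n -> R) (u v : 'I_n) :
  \sum_i ((u == i) || (v == i))%:R * F i = if u == v then F u else F u + F v.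
Proof.
have sd' : forall (F : 'I_n -> R) x, \sum_j (x == j)%:R * F j = F x.
  by move=> G x; rewrite -[RHS](sum_delta G x); apply: eq_bigr => j _; rewrite eq_sym.
case: (u =P v) => [<-|/eqP nuv].
  by under eq_bigr do rewrite orbb; rewrite sd'.
rewrite -(sd' F u) -(sd' F v) -big_split /=; apply: eq_bigr => i _.
case: (u =P i) => [<-|_]; rewrite ?eqxx /=.
  by rewrite (eq_sym v) (negbTE nuv) mul0r addr0.
by rewrite mul0r add0r.
Qed.

Lemma graph_bound E a (M : R) (S : {set 'I_n}) :
  0 <= M ->
  (forall v, v \notin S -> a v = 0) ->
  (forall v, v \in S -> (degree E v)%:R <= M) ->
  (forall u v, u \in S -> v \in S -> u != v -> (degree E u + degree E v)%:R <= M) ->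
  \sum_i \sum_j a i * kirchhoff R E i j * a j <= M * \sum_i a i ^+ 2.
Proof.
move=> M0 aS dS ddS.
pose c i := M * a i ^+ 2 / (degree E i)%:R.
have c0 : forall i, 0 <= c i.
  by move=> i; rewrite /c; apply: divr_ge0 => //; apply: mulr_ge0 => //; apply: sqr_ge0.
have dpos : forall e i, e \in E -> (e.1 == i) || (e.2 == i) -> 0 < (degree E i)%:R :> R.
  move=> e i eE hi; rewrite ltr0n /degree -has_count; apply/hasP; by exists e.
have cge : forall i, i \in S -> 0 < (degree E i)%:R :> R -> a i ^+ 2 <= c i.
  move=> i iS di; rewrite /c ler_pdivlMr // mulrC ler_wpM2r ?sqr_ge0 //.
  exact: dS.
rewrite quad_edges.
apply: (@le_trans _ _ (\sum_(e <- E) \sum_i ((e.1 == i) || (e.2 == i))%:R * c i)).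
  rewrite big_seq_cond [X in _ <= X]big_seq_cond; apply: ler_sum => -[u v] /andP[eE _].
  rewrite sum_end /term /=.
  have du := dpos _ u eE; have dv := dpos _ v eE.
  rewrite /= eqxx /= in du; rewrite /= eqxx orbT in dv.
  have du' := du erefl; have dv' := dv erefl.
  case: (u =P v) => [huv|/eqP nuv].
    subst v.
    case: (boolP (u \in S)) => uS; first exact: cge.
    by rewrite aS // expr0n /= c0.
  case: (boolP (u \in S)) => uS; case: (boolP (v \in S)) => vS.
  - by rewrite /c; apply: key_ineq => //; rewrite -natrD; apply: ddS.
  - rewrite (aS v vS) subr0; apply: (le_trans (cge u uS du')).
    by rewrite lerDl c0.
  - rewrite (aS u uS) sub0r sqrrN; apply: (le_trans (cge v vS dv')).
    by rewrite lerDr c0.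
  - by rewrite (aS u uS) (aS v vS) subr0 expr0n /= addr_ge0.
rewrite exchange_big /= mulr_sumr; apply: ler_sum => i _.
rewrite -mulr_suml -count_natr -/(degree E i).
rewrite /c; have [->|dn0] := eqVneq (degree E i) 0%N.
  by rewrite mul0r mulr_ge0 ?sqr_ge0.
by rewrite mulrC divfK ?pnatr_eq0.
Qed.
End Graph.

Lemma rowsub_set (F : fieldType) n (P : 'M[F]_n) (X : {set 'I_n}) :
  P \in unitmx ->
  \rank (rowsub (@enum_val _ (pred_of_set X)) P) = #|X| /\
  forall v : 'rV_n, (v <= rowsub (@enum_val _ (pred_of_set X)) P)%MS ->
    exists y : 'rV_n, v = y *m P /\ forall j, j \notin X -> y 0 j = 0.
Proof.
move=> Pu.
set f := @enum_val _ (pred_of_set X).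
set Rm := rowsub f (1%:M : 'M[F]_n).
have hQ : rowsub f P = Rm *m P by rewrite rowsubE.
split.
  rewrite hQ mxrankMfree ?row_free_unit //.
  apply/eqP; rewrite eqn_leq rank_leq_row /=.
  have RR : Rm *m Rm^T = 1%:M.
    apply/matrixP => i i'; rewrite !mxE.
    under eq_bigr do rewrite !mxE.
    rewrite (bigD1 (f i)) //= big1 ?addr0.
      rewrite eqxx mul1r eq_sym.
      by rewrite (inj_eq enum_val_inj).
    by move=> j /negbTE nj; rewrite eq_sym nj mul0r.
  by have := mxrankM_maxl Rm Rm^T; rewrite RR mxrank1.
move=> v /submxP [z ->]; exists (z *m Rm); split; first by rewrite hQ mulmxA.
move=> j jX; rewrite !mxE big1 // => i _; rewrite !mxE.
have : f i \in X by exact: enum_valP.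
by case: (f i =P j) => [->|_]; rewrite ?(negbTE jX) // mulr0.
Qed.

Lemma char_poly_conj (F : fieldType) n (P A : 'M[F]_n) :
  P \in unitmx -> char_poly (invmx P *m A *m P) = char_poly A.
Proof.
move=> Pu.
pose Q := map_mx (@polyC F) (invmx P); pose Q' := map_mx (@polyC F) P.
have QQ : Q *m Q' = 1%:M by rewrite -map_mxM mulVmx // map_mx1.
rewrite /char_poly.
have -> : char_poly_mx (invmx P *m A *m P) = Q *m char_poly_mx A *m Q'.
  rewrite /char_poly_mx !map_mxM -/Q -/Q' mulmxBr mulmxBl -mulmxA scalar_mxC mulmxA.
  by rewrite -(mulmxA _ Q) QQ mulmx1.
by rewrite !det_mulmx mulrAC -det_mulmx QQ det1 mul1r.
Qed.

Section CX.
Variable R : realType.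
Local Notation C := (R[i]).
Local Notation toC := (real_complex R).
Local Notation cRe := (@complex.Re R).
Local Notation cIm := (@complex.Im R).
Lemma ReM_conj (y : C) (d : R) : cRe (y * toC d * Num.conj y) = d * (cRe y ^+ 2 + cIm y ^+ 2).
Proof. case: y => a b. simpc. rewrite /=. ring. Qed.
Lemma Re_conj2 (x z : C) : cRe (x * Num.conj z) = cRe x * cRe z + cIm x * cIm z.
Proof. case: x => a b; case: z => c d. simpc. rewrite /=. ring. Qed.
Lemma ReD (x z : C) : cRe (x + z) = cRe x + cRe z.
Proof. by case: x; case: z. Qed.
Lemma ReM_real (x : C) (r : R) : cRe (toC r * x) = r * cRe x.
Proof. case: x => a b. simpc. rewrite /=. ring. Qed.
Lemma Re_sum (I : Type) (s : seq I) (F : I -> C) : cRe (\sum_(i <- s) F i) = \sum_(i <- s) cRe (F i).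
Proof. elim: s => [|x s IH]; first by rewrite !big_nil.
by rewrite !big_cons ReD IH. Qed.
End CX.


Local Open Scope sesquilinear_scope.

Lemma count_to_nth (R : realFieldType) (lam : seq R) (M : R) k :
  sorted <=%R lam -> 0 <= M -> (k < count (fun x : R => (x <= M)%R) lam)%N -> lam`_k <= M.
Proof.
move=> ss M0 ck; rewrite leNgt; apply/negP => hlt.
have hk : (k < size lam)%N.
  rewrite ltnNge; apply/negP => hk; move: hlt; rewrite nth_default //.
  by rewrite ltNge M0.
have c0 : count (fun x => x <= M) (drop k lam) = 0%N.
  apply/eqP; rewrite -leqn0 leqNgt -has_count; apply/hasPn => x /(nthP 0) [j hj <-].
  rewrite nth_drop -ltNge; apply: (lt_le_trans hlt).
  rewrite size_drop in hj.
  apply: (sorted_leq_nth le_trans lexx) => //; rewrite ?unfold_in /=; [by rewrite -ltn_subRL | exact: leq_addr].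
move: ck; rewrite -(cat_take_drop k lam) count_cat c0 addn0 => ck.
by have := leq_trans ck (count_size _ (take k lam)); rewrite size_take hk ltnn.
Qed.

Section Main.
Variable R : realType.
Local Notation C := (R[i]).
Local Notation toC := (real_complex R).
Local Notation cRe := (@complex.Re R).
Local Notation cIm := (@complex.Im R).

Lemma adj_sym n (E : quiver n) i j : adjacency E i j = adjacency E j i.
Proof.
rewrite /adjacency eq_sym; case: (j == i) => //.
by apply: eq_count => e; rewrite orbC.
Qed.

Lemma kir_sym n (E : quiver n) : (kirchhoff R E)^T = kirchhoff R E.
Proof.
apply/matrixP => i j; rewrite !mxE adj_sym eq_sym.
by case: (i =P j) => [->|_]; rewrite ?mul0r.
Qed.

Lemma kirc_herm n (E : quiver n) : map_mx toC (kirchhoff R E) \is hermsymmx.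
Proof.
apply/is_hermitianmxP; rewrite expr0 scale1r.
apply/matrixP => i j; rewrite !mxE.
rewrite (@adj_sym _ E j i) (eq_sym j i); case: (i =P j) => [->|_]; rewrite ?mul0r; apply/eqP; by rewrite eq_complex /= oppr0 !eqxx.
Qed.


Lemma ReMk_conj (u v : C) (k : R) :
  cRe (u * toC k * Num.conj v) = k * (cRe u * cRe v + cIm u * cIm v).
Proof. case: u => p q; case: v => p' q'. simpc. rewrite /=. ring. Qed.

Lemma main_count n (E : quiver n) (lam : seq R) (M : R) (S : {set 'I_n}) :
  char_poly (kirchhoff R E) = \prod_(x <- lam) ('X - x%:P) ->
  0 <= M ->
  (forall v, v \in S -> (degree E v)%:R <= M) ->
  (forall u v, u \in S -> v \in S -> u != v -> (degree E u + degree E v)%:R <= M) ->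
  (#|S| <= count (fun x : R => (x <= M)%R) lam)%N.
Proof.
move=> hchar M0 dS ddS.
rewrite leqNgt; apply/negP => hlt.
pose K := kirchhoff R E; pose Kc := map_mx toC K.
have Kh : Kc \is hermsymmx := kirc_herm _ E.
pose P := spectralmx Kc; pose D := spectral_diag Kc.
have hKc : Kc = invmx P *m diag_mx D *m P.
  exact/orthomx_spectralP/hermitian_normalmx.
have Pun : P \is unitarymx := spectral_unitarymx Kc.
have Pu : P \in unitmx := spectral_unit Kc.
have PPt : P *m P^t* = 1%:M by apply/unitarymxP.
have iP : invmx P = P^t* := invmx_unitary Pun.
have Dr : forall j, D 0 j = toC (cRe (D 0 j)).
  move=> j; have /mxOverP/(_ 0 j) hr := hermitian_spectral_diag_real Kh.
  by rewrite RRe_real.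
have pe : perm_eq (map toC lam) [seq D 0 i | i <- enum 'I_n].
  apply: prod_XsubC_eq.
  transitivity (char_poly Kc); last first.
    rewrite hKc char_poly_conj // char_poly_trig ?diag_mx_is_trig //.
    rewrite big_map big_enum /=; apply: eq_bigr => i _; by rewrite mxE eqxx mulr1n.
  rewrite /Kc -map_char_poly hchar rmorph_prod big_map; apply: eq_bigr => x _.
  by rewrite -[RHS]/(map_poly toC (_ - _)) map_polyXsubC.
pose J := [set i | M < cRe (D 0 i)].
have cJ : (#|J| + count (fun x : R => (x <= M)%R) lam)%N = n.
  have -> : count (fun x : R => (x <= M)%R) lam = #|~: J|.
    transitivity (count (fun z : C => cRe z <= M) (map toC lam)).
      by rewrite count_map; apply: eq_count => x.
    rewrite (permP pe) count_map enumT cardE /enum_mem size_filter.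
    by apply: eq_count => i; rewrite /= !inE -leNgt.
  by rewrite cardsC card_ord.
have [rA hA] := @rowsub_set _ _ P J Pu.
have [rB hB] := @rowsub_set _ _ 1%:M S (unitmx1 C n).
set AJ := rowsub _ P in rA hA; set BS := rowsub _ 1%:M in rB hB.
have rc := mxrank_sum_cap AJ BS.
have rle := rank_leq_col (AJ + BS)%MS.
have : (0 < \rank (AJ :&: BS))%N. move: rc rle hlt cJ; rewrite rA rB. move=> h1 h2 h3 h4. have ar : forall a b c d e m : nat, (a + b = c + d -> a <= m -> e < d -> c + e = m -> 0 < b)%N by move=> *; lia. exact: (ar _ _ _ _ _ _ h1 h2 h3 h4).
rewrite lt0n mxrank_eq0 => /rowV0Pn [x xc x0].
have [y [xy yJ]] := hA x (submx_trans xc (capmxSl _ _)).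
have [z [xz zS]] := hB x (submx_trans xc (capmxSr _ _)).
rewrite mulmx1 in xz.
have xS : forall j, j \notin S -> x 0 j = 0 by move=> j /zS; rewrite xz.
have eq1 : x *m Kc *m x^t* = y *m diag_mx D *m y^t*.
  rewrite hKc iP xy trmx_mul map_mxM !mulmxA -(mulmxA y P) PPt mulmx1.
  by rewrite -(mulmxA _ P) PPt mulmx1.
have eq2 : x *m x^t* = y *m y^t*.
  by rewrite xy trmx_mul map_mxM !mulmxA -(mulmxA y P) PPt mulmx1.
pose a j := cRe (x 0 j); pose b j := cIm (x 0 j).
pose r j := cRe (y 0 j) ^+ 2 + cIm (y 0 j) ^+ 2.
have ReQ : cRe ((x *m Kc *m x^t*) 0 0) =
    \sum_i \sum_j a i * K i j * a j + \sum_i \sum_j b i * K i j * b j.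
  rewrite mxE; apply: etrans; first exact: Re_sum.
  transitivity (\sum_j \sum_i K i j * (a i * a j + b i * b j)).
    apply: eq_bigr => j _; rewrite /= !mxE mulr_suml; apply: etrans; first exact: Re_sum.
    apply: eq_bigr => i _; rewrite /= !mxE; apply: etrans; first exact: ReMk_conj.
    by [].
  rewrite exchange_big -big_split /=; apply: eq_bigr => i _.
  rewrite -big_split /=; apply: eq_bigr => j _; ring.
have ReN : cRe ((x *m x^t*) 0 0) = \sum_i a i ^+ 2 + \sum_i b i ^+ 2.
  rewrite mxE Re_sum -big_split /=; apply: eq_bigr => i _.
  by rewrite !mxE Re_conj2 -!expr2.
have ReQ' : cRe ((y *m diag_mx D *m y^t*) 0 0) = \sum_j cRe (D 0 j) * r j.
  rewrite mxE Re_sum; apply: eq_bigr => j _.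
  by rewrite mul_mx_diag !mxE Dr ReM_conj.
have ReN' : cRe ((y *m y^t*) 0 0) = \sum_j r j.
  rewrite mxE Re_sum; apply: eq_bigr => j _.
  by rewrite !mxE Re_conj2 -!expr2.
have aS : forall v, v \notin S -> a v = 0 by move=> v /xS; rewrite /a => ->.
have bS : forall v, v \notin S -> b v = 0 by move=> v /xS; rewrite /b => ->.
have ga := graph_bound _ _ E a M S M0 aS dS ddS.
have gb := graph_bound _ _ E b M S M0 bS dS ddS.
have r0 : forall j, 0 <= r j by move=> j; rewrite /r addr_ge0 ?sqr_ge0.
have [j0 yj0] : exists j0, y 0 j0 != 0.
  case: (pickP (fun j => y 0 j != 0)) => [j0 hj|h]; first by exists j0.
  exfalso; move/negP: x0; apply; apply/eqP; rewrite xy.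
  have -> : y = 0 by apply/rowP => j; rewrite mxE; move/negbT: (h j); rewrite negbK => /eqP.
  by rewrite mul0mx.
have j0J : j0 \in J by apply/negPn/negP => /yJ; apply/eqP.
have rj0 : 0 < r j0.
  rewrite lt_neqAle r0 andbT eq_sym; apply/negP => /eqP; rewrite /r.
  move: yj0; case: (y 0 j0) => p q /= yn hpq.
  have := sqr_ge0 p; have := sqr_ge0 q => h1 h2.
  have : p ^+ 2 == 0 by rewrite eq_le h2 andbT; lra.
  have : q ^+ 2 == 0 by rewrite eq_le h1 andbT; lra.
  rewrite !sqrf_eq0 => /eqP q0 /eqP p0; move: yn; rewrite p0 q0.
  by rewrite eqxx.
have strict : M * \sum_j r j < \sum_j cRe (D 0 j) * r j.
  rewrite -subr_gt0 mulr_sumr -sumrB (bigD1 j0) //=.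
  apply: (@lt_le_trans _ _ ((cRe (D 0 j0)) * r j0 - M * r j0)).
    rewrite -mulrBl; apply: mulr_gt0 => //; rewrite subr_gt0.
    by move: j0J; rewrite inE.
  rewrite lerDl; apply: sumr_ge0 => j _.
  case: (boolP (j \in J)) => jJ.
    rewrite -mulrBl; apply: mulr_ge0 => //; rewrite subr_ge0; apply: ltW.
    by move: jJ; rewrite inE.
  by rewrite /r (yJ j jJ) /= expr0n /= addr0 !mulr0 subr0.
move: ReQ ReN; rewrite eq1 eq2 ReQ' ReN' => h1 h2.
rewrite h1 h2 mulrDr in strict.
by have := lerD ga gb; rewrite leNgt strict.
Qed.

End Main.

Local Close Scope sesquilinear_scope.

Theorem theorem1 (R : realType) (n : nat) (E : quiver n) (hn : (0 < n)%N)
  (lam : seq R)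
  (hsort : sorted <=%R lam)
  (hchar : char_poly (kirchhoff R E) = \prod_(x <- lam) ('X - x%:P)) :
  forall k : nat, (k < n)%N ->
    lam`_k <= ((nth 0%N (sorted_degrees E) k)
               + (if k is k'.+1 then nth 0%N (sorted_degrees E) k' else 0%N))%:R.
Proof.
move=> k kn.
have [S [cS dS ddS]] := choose_S _ E _ kn.
apply: count_to_nth => //.
apply: (leq_trans cS); apply: (@main_count R n E lam) => //.
- by move=> v vS; rewrite ler_nat; apply: dS.
- by move=> u v uS vS uv; rewrite ler_nat; apply: ddS.
Qed.
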